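(* Let $1<n\leq m$ and let $v\in Z_{n,m}$ with $h(v)\geq h_{n,m}$ and $\sum_{i\in I_c(v)}v_i=0$. Then $d(v,0)\leq D_{n,m}$.
   Context: Elements of $\mathbb{Z}_n$ are identified with representatives in $\{0,\dots,n-1\}$ (so $v_0,v_{m+1}$ are such integers in sums). $Z_{n,m}$ has vertices $u=(u_0,\dots,u_{m+1})\in\mathbb{Z}_n\times\{-1,0,1\}^m\times\mathbb{Z}_n$ with $\sum u_i\equiv0\pmod n$; $u,v$ adjacent if there is $0\leq i\leq m$ with $u_j=v_j$ for $j\notin\{i,i+1\}$ and either ($u_i=v_i+1$, $u_{i+1}=v_{i+1}-1$) or ($u_i=v_i-1$, $u_{i+1}=v_{i+1}+1$), arithmetic in coordinates $0,m+1$ in $\mathbb{Z}_n$. $d$ is graph distance, $0$ the all-zero vertex. $\operatorname{Piv}(v)$ is the set of $-1\le p\le m+1$ with $n\mid\sum_{i=0}^pv_i$. $p_l(v)=\max\{p\in\operatorname{Piv}(v):p<\frac m2\}$, $p_r(v)=\min\{p\in\operatorname{Piv}(v):p\ge\frac m2\}$, $I_c(v)=\{p_l(v)+1,\dots,p_r(v)\}$, $h(v)=\min\{|p-\frac m2|:p\in\operatorname{Piv}(v)\}$, $h_{n,m}=\frac n2$ if $2\mid(m-n)$ and $\frac{n+1}2$ otherwise. $u^{(0)}$: $u_i=1$ ($1\le i\le m$), $u_0\equiv-\lfloor\frac{m-n}2\rfloor\pmod n$; for $n<m$, $m-n$ odd, $u^{(1)}$: $u_{\lceil(m+1)/2\rceil}=0$,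 other $u_i=1$ ($1\le i\le m$), $u_0\equiv-\lfloor\frac{m-n}2\rfloor\pmod n$. $D_{n,m}=d(u^{(0)},0)$ if $2\mid(m-n)$, else $\max\{d(u^{(0)},0),d(u^{(1)},0)\}$. *)

(* Defs.v *)
From mathcomp Require Import all_boot all_order all_algebra.
Set Implicit Arguments. Unset Strict Implicit. Unset Printing Implicit Defensive.
Import Order.TTheory GRing.Theory Num.Theory.
Local Open Scope ring_scope.

(* A vertex u = (u_0,...,u_{m+1}) of Z_{n,m} is a sequence of integers of
   size m+2; u_0, u_{m+1} are the representatives in {0,...,n-1} of elements
   of Z_n, u_1..u_m lie in {-1,0,1}, and the total sum is 0 mod n. *)
Definition is_vertex (n m : nat) (u : seq int) : Prop :=
  [/\ size u = m.+2,
      (0 <= u`_0 < n%:Z),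
      (0 <= u`_m.+1 < n%:Z),
      (forall i : nat, (0 < i <= m)%N -> u`_i \in [:: -1; 0; 1]) &
      (n%:Z %| \sum_(i < m.+2) u`_i)%Z].

Definition coord_eq (n m i : nat) (x y : int) : bool :=
  if (i == 0)%N || (i == m.+1)%N then (x == y %[mod n%:Z])%Z else x == y.

Definition adj (n m : nat) (u v : seq int) : Prop :=
  is_vertex n m u /\ is_vertex n m v /\
  exists i : nat, (i <= m)%N /\
    (forall j : nat, j != i -> j != i.+1 -> u`_j = v`_j) /\
    ((coord_eq n m i u`_i (v`_i + 1) && coord_eq n m i.+1 u`_i.+1 (v`_i.+1 - 1))
     \/ (coord_eq n m i u`_i (v`_i - 1) && coord_eq n m i.+1 u`_i.+1 (v`_i.+1 + 1))).

(* within n m k u v : d(u,v) <= k, i.e. there is a walk of length <= k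
   from u to v in Z_{n,m} *)
Fixpoint within (n m k : nat) (u v : seq int) : Prop :=
  match k with
  | 0%N => u = v
  | k'.+1 => within n m k' u v \/ exists w, adj n m u w /\ within n m k' w v
  end.

Definition zero_vertex (m : nat) : seq int := nseq m.+2 0.

(* Pivots, shifted by one: q = p + 1 with 0 <= q <= m+2 (i.e. -1 <= p <= m+1);
   q is a (shifted) pivot iff n | sum_{i=0}^{q-1} v_i. *)
Definition piv (n m : nat) (v : seq int) (q : nat) : bool :=
  (q <= m.+2)%N && (n%:Z %| \sum_(0 <= i < q) v`_i)%Z.

(* p < m/2  <=>  2q < m+2 ;  p >= m/2 <=> 2q >= m+2 *)
(* shifted p_l :  q_l = p_l + 1 *)
Definition ql (n m : nat) (v : seq int) : nat :=
  (\max_(q < m.+3 | piv n m v q && (q.*2 < m.+2)%N) q)%N.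
(* shifted p_r :  q_r = p_r + 1 *)
Definition qr (n m : nat) (v : seq int) : nat :=
  \big[minn/m.+2]_(q < m.+3 | piv n m v q && (m.+2 <= q.*2)%N) q.

(* I_c(v) = {p_l+1, ..., p_r} = {q_l, ..., q_r - 1}; sum of v_i over I_c *)
Definition sum_Ic (n m : nat) (v : seq int) : int :=
  \sum_(ql n m v <= i < qr n m v) v`_i.

(* 2 h(v) = min { |2p - m| : p in Piv(v) } = min { |2q - (m+2)| : q shifted pivot } *)
Definition h2 (n m : nat) (v : seq int) : nat :=
  \big[minn/m.+2]_(q < m.+3 | piv n m v q) `|q.*2 - m.+2|%N.

(* 2 h_{n,m} *)
Definition h2nm (n m : nat) : nat := if ~~ odd (m - n) then n else n.+1.

Definition complete (n : nat) (u0 : int) (mid : seq int) : seq int :=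
  u0 :: mid ++ [:: ((- (u0 + \sum_(x <- mid) x)) %% n%:Z)%Z].

Definition u0_coord (n m : nat) : int := ((- ((m - n)./2)%:Z) %% n%:Z)%Z.

Definition u_zero (n m : nat) : seq int :=
  complete n (u0_coord n m) (nseq m 1).

(* u^(1): u_{ceil((m+1)/2)} = 0, i.e. middle position ceil((m+1)/2) - 1 *)
Definition u_one (n m : nat) : seq int :=
  complete n (u0_coord n m)
    (mkseq (fun j => if (j.+1 == (m.+2)./2)%N then 0 else 1) m).

(* d(v, 0) <= D_{n,m}, phrased as: for every k with D_{n,m} <= k, d(v,0) <= k *)
Definition dist_le_D (n m : nat) (v : seq int) : Prop :=
  forall k : nat,
    within n m k (u_zero n m) (zero_vertex m) ->
    (odd (m - n) -> within n m k (u_one n m) (zero_vertex m)) ->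
    within n m k v (zero_vertex m).

(* Main.v *)
Require Import Defs.
From mathcomp Require Import all_boot all_order all_algebra zify.
Import Order.TTheory GRing.Theory Num.Theory.
Local Open Scope ring_scope.

Definition P (v : seq int) (q : nat) : int := \sum_(0 <= i < q) v`_i.
Definition Phi (m : nat) (v : seq int) (t : int) : int :=
  \sum_(1 <= q < m.+2) `|P v q - t|.

Lemma PS v q : P v q.+1 = P v q + v`_q.
Proof. by rewrite /P big_nat_recr. Qed.

Lemma P1 v : P v 1 = v`_0.
Proof. by rewrite /P big_nat1. Qed.

Lemma sum_ind1 (m i : nat) : (i <= m)%N ->
  \sum_(1 <= q < m.+2) (if q == i.+1 then 1 else 0 : int) = 1.
Proof.
move=> Hi. rewrite -big_mkcond big_nat1_eq.
by have -> : (1 <= i.+1 < m.+2)%N by lia.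
Qed.

Lemma P_shift (n m i : nat) (u w : seq int) (e j : int) :
  (i <= m)%N ->
  (forall l, (l <= m)%N -> l != i -> l != i.+1 -> u`_l = w`_l) ->
  u`_i = w`_i + e + (if i == 0%N then j * n%:Z else 0) ->
  ((i.+1 <= m)%N -> u`_i.+1 = w`_i.+1 - e) ->
  forall q, (1 <= q <= m.+1)%N ->
    P u q = P w q + (if i == 0%N then j * n%:Z else 0) + (if q == i.+1 then e else 0).
Proof.
move=> Him Hoth Hi Hi1; elim=> [//|q IH Hq].
case: q IH Hq => [|q] IH Hq.
  clear IH; rewrite !P1; case: (i =P 0%N) => [Ei|/eqP Hi0].
    by subst i; rewrite Hi /=; lia.
  rewrite Hoth //; last by case: i Hi0 {Hi Hi1 Hoth Him}.
  have -> : (1 == i.+1)%N = false by case: i Hi0 {Hi Hi1 Hoth Him}.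
  by rewrite !addr0.
rewrite PS (PS w) IH; last by lia.
have Hq1 : (q.+1 <= m)%N by lia.
case: (q.+1 =P i) => [Hqi|/eqP Hqi].
  rewrite -Hqi in Hi *. rewrite Hi /=.
  rewrite eqxx. have -> : (q.+1 == q.+2)%N = false by lia. lia.
case: (q.+1 =P i.+1) => [Hqi1|/eqP Hqi1].
  have Hqi' : q = i by case: Hqi1.
  subst q. rewrite Hi1 //.
  have -> : (i.+2 == i.+1)%N = false by lia.
  lia.
rewrite (Hoth q.+1) //.
have -> : (q.+2 == i.+1)%N = (q.+1 == i) by [].
rewrite (negbTE Hqi). lia.
Qed.

Lemma coord_mid n m i x y : (0 < i <= m)%N -> coord_eq n m i x y -> x = y.
Proof.
move=> Hi; rewrite /coord_eq.
have -> : ((i == 0%N) || (i == m.+1)) = false by lia.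
by move/eqP.
Qed.

Lemma coord_end n m i x y : ((i == 0%N) || (i == m.+1)) ->
  coord_eq n m i x y -> exists j : int, x = y + j * n%:Z.
Proof.
move=> Hi; rewrite /coord_eq Hi eqz_mod_dvd => /dvdzP [j Hj].
by exists j; rewrite -Hj addrC subrK.
Qed.

Lemma adj_data n m u w : adj n m u w ->
  exists i (e j : int), [/\ (i <= m)%N, e = 1 \/ e = -1,
    (forall l, (l <= m)%N -> l != i -> l != i.+1 -> u`_l = w`_l),
    u`_i = w`_i + e + (if i == 0%N then j * n%:Z else 0) &
    ((i.+1 <= m)%N -> u`_i.+1 = w`_i.+1 - e)].
Proof.
move=> [_ [_ [i [Him [Hoth Hd]]]]].
have key : forall e, (e = 1 \/ e = -1) -> coord_eq n m i u`_i (w`_i + e) ->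
   coord_eq n m i.+1 u`_i.+1 (w`_i.+1 - e) -> exists i (e j : int), [/\ (i <= m)%N, e = 1 \/ e = -1,
    (forall l, (l <= m)%N -> l != i -> l != i.+1 -> u`_l = w`_l),
    u`_i = w`_i + e + (if i == 0%N then j * n%:Z else 0) &
    ((i.+1 <= m)%N -> u`_i.+1 = w`_i.+1 - e)].
  move=> e He H1 H2; case: (i =P 0%N) => [Ei|/eqP Ei].
    subst i; have [j Hj] := @coord_end n m 0 _ _ isT H1.
    exists 0%N, e, j; split => //.
    - by move=> l _ Hl1 Hl2; apply: Hoth.
    - by move=> H; apply: (@coord_mid n m 1) H2; lia.
  exists i, e, 0; split => //.
      by move=> l _ Hl1 Hl2; apply: Hoth.
    by rewrite (negbTE Ei) addr0; apply: (@coord_mid n m i) H1; lia.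
  by move=> H; apply: (@coord_mid n m i.+1) H2; lia.
case: Hd => /andP [H1 H2].
  by apply: (key 1) => //; left.
apply: (key (-1)) => //; first by right.
Qed.

Lemma adj_Phi n m u w t : adj n m u w -> (n%:Z %| t)%Z ->
  exists t', (n%:Z %| t')%Z /\ Phi m u t' <= Phi m w t + 1.
Proof.
move=> /adj_data [i [e [j [Him He Hoth Hi Hi1]]]] Ht.
exists (t + (if i == 0%N then j * n%:Z else 0)); split.
  apply: rpredD => //; case: ifP => _; [exact: dvdz_mull|exact: dvdz0].
rewrite /Phi -(@sum_ind1 m i Him) -big_split /=.
apply: ler_sum_nat => q Hq.
rewrite (@P_shift n m i u w e j Him Hoth Hi Hi1); last by lia.
case: He => ->; case: ifP => _; case: ifP => _; lia.
Qed.

Lemma Phi_zero m : Phi m (zero_vertex m) 0 = 0.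
Proof.
rewrite /Phi big1_seq // => q _.
rewrite /P big1_seq ?subr0 ?normr0 // => i _.
by rewrite /zero_vertex nth_nseq if_same.
Qed.

Lemma within_Phi n m k u : within n m k u (zero_vertex m) ->
  exists t, (n%:Z %| t)%Z /\ Phi m u t <= k%:Z.
Proof.
elim: k u => [|k IH] u /=.
  by move=> ->; exists 0; rewrite Phi_zero dvdz0.
case=> [/IH [t [Ht Hk]]|[w [Hadj /IH [t [Ht Hk]]]]].
  by exists t; split => //; lia.
have [tt [Htt H]] := @adj_Phi n m u w t Hadj Ht.
by exists tt; split => //; lia.
Qed.

Definition fixc (n m l : nat) (x : int) : int :=
  if (l == 0%N) || (l == m.+1) then (x %% n%:Z)%Z else x.

Definition mv (n m : nat) (v : seq int) (i : nat) (e : int) : seq int :=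
  mkseq (fun l => if l == i then fixc n m i (v`_i - e)
                  else if l == i.+1 then fixc n m i.+1 (v`_i.+1 + e) else v`_l) m.+2.

Lemma mem3 (x : int) : (x \in [:: -1; 0; 1]) = (-1 <= x <= 1).
Proof. rewrite !inE; apply/idP/idP; lia. Qed.

Lemma coord_fix n m l x d : coord_eq n m l x (fixc n m l (x + d) - d).
Proof.
rewrite /coord_eq /fixc; case: ifP => H; rewrite H.
  rewrite eqz_mod_dvd; apply/dvdzP; exists ((x + d) %/ n%:Z)%Z.
  have := divz_eq (x + d) n%:Z.
  set a := ((x + d) %/ n%:Z)%Z; set b := ((x + d) %% n%:Z)%Z; lia.
by rewrite addrK.
Qed.

Lemma fix_mod n m l x : (0 < n)%N -> exists j : int, fixc n m l x = x + j * n%:Z.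
Proof.
move=> Hn; rewrite /fixc; case: ifP => _; last by exists 0; rewrite mul0r addr0.
exists (- (x %/ n%:Z)%Z); have := divz_eq x n%:Z.
set a := (x %/ n%:Z)%Z; set b := (x %% n%:Z)%Z; lia.
Qed.

Lemma is_vertex_size n m v : is_vertex n m v -> size v = m.+2.
Proof. by case. Qed.

Lemma mv_prop n m v i (e : int) : (1 < n)%N -> is_vertex n m v -> (i <= m)%N ->
  e = 1 \/ e = -1 ->
  ((0 < i)%N -> -1 <= v`_i - e <= 1) ->
  ((i < m)%N -> -1 <= v`_i.+1 + e <= 1) ->
  [/\ is_vertex n m (mv n m v i e), adj n m v (mv n m v i e) &
   exists j : int, forall q, (1 <= q <= m.+1)%N ->
     P (mv n m v i e) q = P v q + (if i == 0%N then j * n%:Z else 0)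
                          + (if q == i.+1 then - e else 0)].
Proof.
move=> Hn Hv Him He Hi Hi1.
have Hsz := @is_vertex_size n m v Hv.
set w := mv n m v i e.
have Hw : forall l, (l < m.+2)%N -> w`_l = (if l == i then fixc n m i (v`_i - e)
                  else if l == i.+1 then fixc n m i.+1 (v`_i.+1 + e) else v`_l).
  by move=> l Hl; rewrite /w /mv nth_mkseq.
have Hwsz : size w = m.+2 by rewrite size_mkseq.
have Hoth : forall l, (l <= m)%N -> l != i -> l != i.+1 -> w`_l = v`_l.
  by move=> l Hl H1 H2; rewrite Hw ?(negbTE H1) ?(negbTE H2) //; lia.
have [j0 Hj0] := @fix_mod n m i (v`_i - e) (ltnW Hn).
have Hwi : w`_i = v`_i + - e + (if i == 0%N then j0 * n%:Z else 0).
  rewrite Hw ?eqxx; last by lia.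
  case: (i =P 0%N) => [Ei|/eqP Ei]; first by rewrite Hj0.
  rewrite /fixc; have -> : ((i == 0%N) || (i == m.+1)) = false by lia.
  by rewrite addr0.
have Hwi1 : (i.+1 <= m)%N -> w`_i.+1 = v`_i.+1 - - e.
  move=> H; rewrite Hw; last by lia.
  have -> : (i.+1 == i) = false by lia.
  rewrite eqxx /fixc; have -> : ((i.+1 == 0%N) || (i.+1 == m.+1)) = false by lia.
  by rewrite opprK.
have Hsh := @P_shift n m i w v (- e) j0 Him Hoth Hwi Hwi1.
have Hwv : is_vertex n m w.
  case: Hv => _ Hv0 Hvm Hvmid Hvs; split => //.
  - rewrite Hw //. case: (0 =P i) => [<-|/eqP E0] /=.
      by rewrite /fixc /= modz_ge0 ?ltz_pmod //; lia.
    by [].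
  - rewrite Hw //. have -> : (m.+1 == i) = false by lia.
    case: (m.+1 =P i.+1) => [E|/eqP E] /=; last by [].
    by rewrite -E /fixc eqxx orbT modz_ge0 ?ltz_pmod //; lia.
  - move=> l Hl; rewrite Hw; last by lia.
    rewrite mem3; case: (l =P i) => [El|/eqP El].
      subst l; rewrite /fixc; have -> : ((i == 0%N) || (i == m.+1)) = false by lia.
      by apply: Hi; lia.
    case: (l =P i.+1) => [El1|/eqP El1].
      subst l; rewrite /fixc; have -> : ((i.+1 == 0%N) || (i.+1 == m.+1)) = false by lia.
      by apply: Hi1; lia.
    by rewrite -mem3; apply: Hvmid.
  - have E : forall u : seq int, \sum_(l < m.+2) u`_l = P u m.+1 + u`_m.+1.
      by move=> u; rewrite -PS /P big_mkord.
    move: Hvs; rewrite !E Hsh; last by lia.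
    rewrite Hw //. have -> : (m.+1 == i) = false by lia.
    case: (m.+1 =P i.+1) => [Em|/eqP Em].
      have Eim : i = m by case: Em.
      subst i; rewrite /fixc eqxx orbT.
      have [j1 Hj1] := @fix_mod n m m.+1 (v`_m.+1 + e) (ltnW Hn).
      rewrite /fixc eqxx orbT in Hj1; rewrite Hj1 => H.
      rewrite (_ : _ + _ = (P v m.+1 + v`_m.+1) + ((if m == 0%N then j0 else 0) + j1) * n%:Z);
        last by case: ifP => _; lia.
      by apply: rpredD => //; apply: dvdz_mull.
    rewrite /=.
    move=> H.
    rewrite (_ : _ + _ = (P v m.+1 + v`_m.+1) + (if i == 0%N then j0 else 0) * n%:Z);
      last by case: (i == 0%N); rewrite ?mul0r !addr0 // addrAC.
    by apply: rpredD => //; apply: dvdz_mull.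
split => //; last by exists j0.
split => //; split => //; exists i; split => //; split.
  move=> l H1 H2; case: (ltnP l m.+2) => Hl.
    by rewrite Hw // (negbTE H1) (negbTE H2).
  by rewrite !nth_default ?Hsz ?Hwsz.
have E1 : w`_i = fixc n m i (v`_i + - e) by rewrite Hw ?eqxx //; lia.
have E2 : w`_i.+1 = fixc n m i.+1 (v`_i.+1 + e).
  rewrite Hw; last by lia.
  have -> : (i.+1 == i) = false by lia.
  by rewrite eqxx.
case: He => He; rewrite He in E1 E2.
  left; apply/andP; split.
    by rewrite E1; have := @coord_fix n m i v`_i (-1); rewrite opprK.
  by rewrite E2; exact: coord_fix.
right; apply/andP; split.
  by rewrite E1 opprK; exact: coord_fix.
by rewrite E2; have := @coord_fix n m i.+1 v`_i.+1 (-1); rewrite opprK.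
Qed.

Lemma argmax_nat (F : nat -> int) lo hi : (lo <= hi)%N ->
  exists q, (lo <= q <= hi)%N /\ forall q', (lo <= q' <= hi)%N -> F q' <= F q.
Proof.
elim: hi => [|hi IH] Hlo.
  by exists lo; split; [lia| move=> q' Hq'; have -> : q' = lo by lia].
case: (ltnP hi lo) => Hh.
  by exists lo; split; [lia| move=> q' Hq'; have -> : q' = lo by lia].
have [q [Hq Hmax]] := IH Hh.
case: (lerP (F hi.+1) (F q)) => HF.
  exists q; split; first by lia.
  move=> q' Hq'; case: (q' =P hi.+1) => [->//|/eqP Hne].
  by apply: Hmax; lia.
exists hi.+1; split; first by lia.
move=> q' Hq'; case: (q' =P hi.+1) => [->//|/eqP Hne].
have := Hmax q'; lia.
Qed.

Lemma argmin_nat (F : nat -> int) lo hi : (lo <= hi)%N ->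
  exists q, (lo <= q <= hi)%N /\ forall q', (lo <= q' <= hi)%N -> F q <= F q'.
Proof.
move=> H; have [q [Hq Hm]] := @argmax_nat (fun x => - F x) lo hi H.
exists q; split => // q' Hq'; have := Hm q' Hq'; lia.
Qed.

Lemma dvd_small (n : nat) (x : int) : (0 < n)%N -> 0 <= x < n%:Z -> (n%:Z %| x)%Z -> x = 0.
Proof.
move=> Hn Hx /dvdzP [c Hc]; subst x.
case: (lerP c 0) => Hc0; nia.
Qed.

Lemma within_refl n m k u : within n m k u u.
Proof. by elim: k => [|k IH] //=; left. Qed.

Lemma Phi_ge0 m v t : 0 <= Phi m v t.
Proof. by apply: sumr_ge0 => q _; apply: normr_ge0. Qed.

Lemma sumP m v : \sum_(l < m.+2) v`_l = P v m.+1 + v`_m.+1.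
Proof. by rewrite -PS /P big_mkord. Qed.

Lemma Phi0_zero n m v t : (1 < n)%N -> is_vertex n m v -> (n%:Z %| t)%Z ->
  Phi m v t = 0 -> v = zero_vertex m.
Proof.
move=> Hn Hv Ht /eqP; rewrite /Phi psumr_eq0; last by move=> q _; apply: normr_ge0.
move=> /allP Hall.
have HP : forall q, (1 <= q <= m.+1)%N -> P v q = t.
  move=> q Hq; have := Hall q; rewrite mem_index_iota /=.
  by move=> /(_ ltac:(lia)); rewrite normr_eq0 subr_eq0 => /eqP.
case: Hv => Hsz Hv0 Hvm Hvmid Hvs.
have Et : t = 0.
  apply: (@dvd_small n) => //; first by lia.
  by rewrite -(HP 1%N) // P1.
subst t.
apply: (@eq_from_nth _ 0); first by rewrite Hsz size_nseq.
move=> l; rewrite Hsz => Hl; rewrite nth_nseq Hl.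
case: l Hl => [|l] Hl; first by rewrite -P1 HP.
case: (ltnP l m) => Hlm.
  have H1 : P v l.+1 = 0 by apply: HP; lia.
  have H2 : P v l.+2 = 0 by apply: HP; lia.
  have := PS v l.+1; rewrite H1 H2 add0r => <-. done.
have El : l = m by lia.
subst l.
apply: (@dvd_small n) => //; first by lia.
by move: Hvs; rewrite sumP HP ?add0r //; lia.
Qed.

Lemma Phi_step n m v t q (e : int) : (1 < n)%N -> is_vertex n m v -> (n%:Z %| t)%Z ->
  (1 <= q <= m.+1)%N -> e = 1 \/ e = -1 -> 0 < e * (P v q - t) ->
  ((1 < q)%N -> e * P v q.-1 <= e * P v q) ->
  ((q <= m)%N -> e * P v q.+1 <= e * P v q) ->
  exists w t', [/\ is_vertex n m w, adj n m v w, (n%:Z %| t')%Z & Phi m w t' = Phi m v t - 1].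
Proof.
move=> Hn Hv Ht Hq He Hpos Hl Hr.
have Hmid : forall l, (0 < l <= m)%N -> (-1 : int) <= (v`_l : int) <= (1 : int).
  by case: Hv => _ _ _ Hvmid _ l Hl0; rewrite -mem3; apply: Hvmid.
move: Hq Hpos Hl Hr; case: q => [//|i] Hq Hpos Hl Hr.
have Him : (i <= m)%N by lia.
have Hc1 : (0 < i)%N -> -1 <= v`_i - e <= 1.
  move=> Hi; have := Hl ltac:(lia); rewrite /= PS.
  have := Hmid i ltac:(lia); case: He => ->; set x := v`_i; set y := P v i; lia.
have Hc2 : (i < m)%N -> -1 <= v`_i.+1 + e <= 1.
  move=> Hi; have := Hr ltac:(lia); rewrite PS.
  have := Hmid i.+1 ltac:(lia); case: He => ->; lia.
have [Hw Hadj [j Hj]] := @mv_prop n m v i e Hn Hv Him He Hc1 Hc2.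
exists (mv n m v i e), (t + (if i == 0%N then j * n%:Z else 0)); split => //.
  apply: rpredD => //; case: ifP => _; [exact: dvdz_mull|exact: dvdz0].
rewrite /Phi -(@sum_ind1 m i Him) -sumrB.
apply: eq_big_nat => q' Hq'.
rewrite Hj //.
case: (q' =P i.+1) => [->|/eqP Hne].
  move: Hpos; case: He => ->; set s := (if _ then _ else _); set y := P v i.+1; lia.
set s := (if _ then _ else _); set y := P v q'; lia.
Qed.

Lemma Phi_within n m k v t : (1 < n)%N -> is_vertex n m v -> (n%:Z %| t)%Z ->
  Phi m v t <= k%:Z -> within n m k v (zero_vertex m).
Proof.
move=> Hn; elim: k v t => [|k IH] v t Hv Ht Hk.
  have H0 : Phi m v t = 0 by have := Phi_ge0 m v t; lia.
  by rewrite /= (@Phi0_zero n m v t).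
case: (Phi m v t =P 0) => [H0|/eqP Hne].
  by rewrite (@Phi0_zero n m v t) //; apply: within_refl.
have Hm1 : (1 <= m.+1)%N by [].
have [qa [Hqa Hmax]] := @argmax_nat (P v) 1 m.+1 Hm1.
have [qb [Hqb Hmin]] := @argmin_nat (P v) 1 m.+1 Hm1.
have cont : forall w t', is_vertex n m w -> adj n m v w -> (n%:Z %| t')%Z ->
    Phi m w t' = Phi m v t - 1 -> within n m k.+1 v (zero_vertex m).
  move=> w t' Hw Hadj Ht' HPhi; right; exists w; split => //.
  by apply: (IH w t') => //; rewrite HPhi; lia.
case: (ltrP t (P v qa)) => Ha.
  have [w [t' [Hw Hadj Ht' HPhi]]] := @Phi_step n m v t qa 1 Hn Hv Ht Hqa (or_introl erefl)
     ltac:(rewrite mul1r; lia)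
     ltac:(move=> H; rewrite !mul1r; apply: Hmax; lia)
     ltac:(move=> H; rewrite !mul1r; apply: Hmax; lia).
  exact: (cont w t').
case: (ltrP (P v qb) t) => Hb.
  have [w [t' [Hw Hadj Ht' HPhi]]] := @Phi_step n m v t qb (-1) Hn Hv Ht Hqb (or_intror erefl)
     ltac:(rewrite mulN1r; lia)
     ltac:(move=> H; rewrite !mulN1r lerN2; apply: Hmin; lia)
     ltac:(move=> H; rewrite !mulN1r lerN2; apply: Hmin; lia).
  exact: (cont w t').
exfalso; move/eqP: Hne; apply; rewrite /Phi big1_seq // => q; rewrite mem_index_iota => Hq.
have := Hmax q ltac:(lia); have := Hmin q ltac:(lia).
set y := P v q; set ya := P v qa; set yb := P v qb.
move=> H1 H2; have -> : y - t = 0 by lia.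
by rewrite normr0.
Qed.

Lemma piv_P n m v q : piv n m v q = (q <= m.+2)%N && (n%:Z %| P v q)%Z.
Proof. by []. Qed.

Lemma ql_prop n m v : piv n m v (ql n m v) && ((ql n m v).*2 < m.+2)%N.
Proof.
rewrite /ql; apply: (big_ind (fun x : nat => is_true (piv n m v x && (x.*2 < m.+2)%N))).
- by rewrite /piv /= big_geq ?dvdz0.
- by move=> x y Hx Hy; rewrite /maxn; case: ifP.
- by move=> i.
Qed.

Lemma qr_prop n m v : (n%:Z %| P v m.+2)%Z ->
  piv n m v (qr n m v) && (m.+2 <= (qr n m v).*2)%N.
Proof.
move=> Hs; rewrite /qr; apply: (big_ind (fun x : nat => is_true (piv n m v x && (m.+2 <= x.*2)%N))).
- by rewrite /piv leqnn Hs /=; lia.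
- by move=> x y Hx Hy; rewrite /minn; case: ifP.
- by move=> i.
Qed.

Lemma ql_max n m v q : (q < m.+3)%N -> piv n m v q -> (q.*2 < m.+2)%N ->
  (q <= ql n m v)%N.
Proof.
move=> Hq Hp H2; rewrite /ql.
have := @leq_bigmax_cond _ (fun i : 'I_m.+3 => piv n m v i && (i.*2 < m.+2)%N)
   (fun i : 'I_m.+3 => nat_of_ord i) (Ordinal Hq).
by apply; rewrite /= Hp H2.
Qed.

Lemma bigmin_le (I : eqType) (r : seq I) (Pr : pred I) (F : I -> nat) d j :
  j \in r -> Pr j -> (\big[minn/d]_(i <- r | Pr i) F i <= F j)%N.
Proof.
elim: r => // a r IH; rewrite inE big_cons => /orP [/eqP <-|Hj] Hp.
  by rewrite Hp; exact: geq_minl.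
case: ifP => _; last exact: IH.
exact: leq_trans (geq_minr _ _) (IH Hj Hp).
Qed.

Lemma qr_min n m v q : (q < m.+3)%N -> piv n m v q -> (m.+2 <= q.*2)%N ->
  (qr n m v <= q)%N.
Proof.
move=> Hq Hp H2; rewrite /qr.
have := @bigmin_le _ (index_enum 'I_m.+3) (fun i : 'I_m.+3 => piv n m v i && (m.+2 <= i.*2)%N)
   (fun i : 'I_m.+3 => nat_of_ord i) m.+2 (Ordinal Hq).
by apply; rewrite ?mem_index_enum //= Hp H2.
Qed.

Lemma h2_min n m v q : (q < m.+3)%N -> piv n m v q ->
  (h2 n m v <= `|q.*2 - m.+2|)%N.
Proof.
move=> Hq Hp; rewrite /h2.
have := @bigmin_le _ (index_enum 'I_m.+3) (fun i : 'I_m.+3 => piv n m v i)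
   (fun i : 'I_m.+3 => `|(nat_of_ord i).*2 - m.+2|%N) m.+2 (Ordinal Hq).
by apply; rewrite ?mem_index_enum.
Qed.

Lemma Plip n m v x y : is_vertex n m v -> (1 <= x <= y)%N -> (y <= m.+1)%N ->
  `|P v y - P v x| <= (y - x)%N%:Z.
Proof.
move=> Hv Hxy Hy.
have Hmid : forall l, (0 < l <= m)%N -> -1 <= v`_l <= 1.
  by case: Hv => _ _ _ Hvmid _ l Hl0; rewrite -mem3; apply: Hvmid.
elim: y Hxy Hy => [|y IH] Hxy Hy; first by lia.
case: (x =P y.+1) => [->|/eqP Hne]; first by rewrite subrr normr0 subnn.
rewrite PS; have := IH ltac:(lia) ltac:(lia); have := Hmid y ltac:(lia).
set a := v`_y; set b := P v y; set c := P v x; lia.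
Qed.




Definition W (n m q : nat) : int :=
  n%:Z + Num.max 0 (`|(q.*2)%:Z - (m.+2)%:Z| - (h2nm n m)%:Z).

Lemma h2nm_ge n m : (n <= h2nm n m)%N.
Proof. by rewrite /h2nm; case: ifP. Qed.

Lemma step_arith (sg x y K n : int) : (sg = 1 \/ sg = -1) -> 0 < sg * (y - K) < n ->
  `|x - y| <= 1%N%:Z -> x != K -> x != K + sg * n -> 0 < sg * (x - K) < n.
Proof. by case=> ->; lia. Qed.

Lemma out_arith (x K sg n d : int) : (sg = 1 \/ sg = -1) -> 0 <= n ->
  `|x - K| <= d -> `|x - K| + `|x - (K + sg * n)| <= n + 2 * d.
Proof. by case=> ->; lia. Qed.

Lemma in_arith0 (x K sg n : int) : x = K -> (sg = 1 \/ sg = -1) -> 0 <= n ->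
  `|x - K| + `|x - (K + sg * n)| <= n.
Proof. by move=> ->; case=> ->; lia. Qed.

Lemma in_arith (x K sg n : int) : (sg = 1 \/ sg = -1) ->
  0 < sg * (x - K) < n -> `|x - K| + `|x - (K + sg * n)| <= n.
Proof. by case=> ->; lia. Qed.

Lemma partC n m v : (1 < n)%N -> (n <= m)%N -> is_vertex n m v ->
  (h2nm n m <= h2 n m v)%N -> sum_Ic n m v = 0 ->
  exists K K', [/\ (n%:Z %| K)%Z, (n%:Z %| K')%Z &
   forall q, (1 <= q <= m.+1)%N -> `|P v q - K| + `|P v q - K'| <= W n m q].
Proof.
move=> Hn Hnm Hv Hh Hs.
have Htot : (n%:Z %| P v m.+2)%Z.
  by case: Hv => _ _ _ _; rewrite /P big_mkord.
have Hsz := @is_vertex_size n m v Hv.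
have Hmid : forall l, (0 < l <= m)%N -> -1 <= v`_l <= 1.
  by case: Hv => _ _ _ Hvmid _ l Hl0; rewrite -mem3; apply: Hvmid.
have Hv0 : 0 <= v`_0 < n%:Z by case: Hv.
have Hhn := h2nm_ge n m.
set a := ql n m v in Hs *; set b := qr n m v in Hs *.
have /andP [Hpa Ha2] := ql_prop n m v.
have /andP [Hpb Hb2] := @qr_prop n m v Htot.
move: (Hpa) (Hpb); rewrite !piv_P => /andP [Ham HKa] /andP [Hbm HKb].
have Hha := @h2_min n m v a ltac:(lia) Hpa.
have Hhb := @h2_min n m v b ltac:(lia) Hpb.
have HA : (a.*2 + h2nm n m <= m.+2)%N by lia.
have HB : (m.+2 + h2nm n m <= b.*2)%N by lia.
have Nopiv : forall q, (a < q < b)%N -> ~~ (n%:Z %| P v q)%Z.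
  move=> q Hq; apply/negP => Hd.
  have Hp : piv n m v q by rewrite piv_P Hd andbT; lia.
  case: (ltnP q.*2 m.+2) => H2.
    by have := @ql_max n m v q ltac:(lia) Hp H2; rewrite -/a; lia.
  by have := @qr_min n m v q ltac:(lia) Hp H2; rewrite -/b; lia.
have HKb' : P v b = P v a.
  move: Hs; rewrite /sum_Ic -/a -/b => Hs.
  by rewrite /P (@big_cat_nat _ _ _ a) //= ?Hs ?addr0 //; lia.
set K := P v a in HKa HKb' *.
have [sg [Hsg Hst]] : exists sg : int, (sg = 1 \/ sg = -1) /\ 0 < sg * (P v a.+1 - K) < n%:Z.
  have Hna := Nopiv a.+1 ltac:(lia).
  case: (a =P 0%N) => [Ea|/eqP Ea].
    have EK : K = 0 by rewrite /K Ea /P big_geq.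
    rewrite EK; exists 1; split; first by left.
    have Hne : P v a.+1 != 0 by apply: contraNneq Hna => ->; apply: dvdz0.
    move: Hne Hv0; rewrite Ea P1; set x := v`_0; lia.
  have Hl := @Plip n m v a a.+1 Hv ltac:(lia) ltac:(lia).
  have Hne : P v a.+1 != K by apply: contraNneq Hna => ->.
  have : P v a.+1 - K = 1 \/ P v a.+1 - K = -1.
    by move: Hl Hne; set x := P v a.+1; set y := K; lia.
  case=> ->; [exists 1 | exists (-1)]; (split; [by [left|right] | lia]).
have Hinv : forall d, (a.+1 + d < b)%N -> 0 < sg * (P v (a.+1 + d)%N - K) < n%:Z.
  elim=> [|d IH] Hd; first by rewrite addn0.
  have HI := IH ltac:(lia).
  have Hl := @Plip n m v (a.+1 + d)%N (a.+1 + d.+1)%N Hv ltac:(lia) ltac:(lia).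
  have Hna := Nopiv (a.+1 + d.+1)%N ltac:(lia).
  have H1 : P v (a.+1 + d.+1)%N != K by apply: contraNneq Hna => ->.
  have H2 : P v (a.+1 + d.+1)%N != K + sg * n%:Z.
    apply: contraNneq Hna => ->; apply: rpredD => //; exact: dvdz_mull.
  rewrite (_ : (a.+1 + d.+1 - (a.+1 + d)%N)%N = 1%N) in Hl; last by lia.
  exact: (@step_arith _ _ _ _ _ Hsg HI Hl H1 H2).
exists K, (K + sg * n%:Z); split => //.
  by apply: rpredD => //; exact: dvdz_mull.
move=> q Hq.
clear Nopiv Hmid Hs Hha Hhb Hpa Hpb HKb Htot Hst Hv0 Hsz Hh.
have HW : forall x : int, x <= Num.max 0 (`|(q.*2)%:Z - (m.+2)%:Z| - (h2nm n m)%:Z) ->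
   `|P v q - K| + `|P v q - (K + sg * n%:Z)| <= n%:Z + x ->
   `|P v q - K| + `|P v q - (K + sg * n%:Z)| <= W n m q.
  move=> x Hx H; rewrite /W; apply: (le_trans H); by rewrite lerD2l.
case: (ltnP q a) => Hqa.
  have Hl := @Plip n m v q a Hv ltac:(lia) ltac:(lia).
  apply: (HW (2 * (a - q)%N%:Z)).
    clear Hinv Hl HW; set z := (h2nm n m) in HA *; lia.
  rewrite distrC in Hl; exact: (@out_arith _ _ _ _ _ Hsg (le0z_nat n) Hl).
case: (ltnP b q) => Hqb.
  have Hl := @Plip n m v b q Hv ltac:(lia) ltac:(lia).
  apply: (HW (2 * (q - b)%N%:Z)).
    clear Hinv Hl HW; set z := (h2nm n m) in HB *; lia.
  rewrite HKb' in Hl; exact: (@out_arith _ _ _ _ _ Hsg (le0z_nat n) Hl).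
apply: (HW 0); first by rewrite le_max lexx.
rewrite addr0.
case: (q =P a) => [->|/eqP Hqa'].
  exact: (@in_arith0 _ _ _ _ erefl Hsg (le0z_nat n)).
case: (q =P b) => [->|/eqP Hqb'].
  exact: (@in_arith0 _ _ _ _ HKb' Hsg (le0z_nat n)).
have := Hinv (q - a.+1)%N ltac:(lia).
rewrite (_ : (a.+1 + (q - a.+1))%N = q); last by lia.
exact: (@in_arith _ _ _ _ Hsg).
Qed.



Lemma mult_split (n : nat) (t : int) : (0 < n)%N -> (n%:Z %| t)%Z -> t <= 0 \/ n%:Z <= t.
Proof.
move=> Hn /dvdzP [c ->]; case: (lerP c 0) => Hc; [left|right]; nia.
Qed.

Lemma pair_lb (n : nat) (x y t : int) : (0 < n)%N -> (n%:Z %| t)%Z -> x + y = n%:Z ->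
  n%:Z <= `|x - t| + `|y - t| /\ `|x - y| <= `|x - t| + `|y - t|.
Proof. move=> Hn Ht Hxy; case: (@mult_split n t Hn Ht) => H; lia. Qed.

Lemma self_lb (n : nat) (x t : int) : (0 < n)%N -> (n%:Z %| t)%Z -> x + x = n%:Z + 1 ->
  n%:Z <= `|x - t| + `|x - t| + 1.
Proof. move=> Hn Ht Hxy; case: (@mult_split n t Hn Ht) => H; lia. Qed.

Lemma P_cons x s q : P (x :: s) q.+1 = x + P s q.
Proof. by rewrite /P big_nat_recl. Qed.

Lemma P_cat (s t : seq int) q : (q <= size s)%N -> P (s ++ t) q = P s q.
Proof.
move=> Hq; apply: eq_big_nat => i Hi; rewrite nth_cat.
by have -> : (i < size s)%N by lia.
Qed.

Lemma P_nseq1 m q : (q <= m)%N -> P (nseq m (1 : int)) q = q%:Z.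
Proof.
elim: q => [|q IH] Hq; first by rewrite /P big_geq.
by rewrite PS IH ?nth_nseq; [have -> : (q < m)%N by lia|lia]; lia.
Qed.

Lemma P_u1mid m i0 q : (q <= m)%N -> (0 < i0)%N ->
  P (mkseq (fun j => if (j.+1 == i0)%N then 0 else 1 : int) m) q
    = q%:Z - (if (i0 <= q)%N then 1 else 0).
Proof.
move=> + Hi0; elim: q => [|q IH] Hq.
  by rewrite /P big_geq //; have -> : (i0 <= 0)%N = false by lia.
rewrite PS IH ?nth_mkseq; try lia.
case: (q.+1 =P i0) => [E|/eqP E].
  have -> : (i0 <= q)%N = false by lia.
  have -> : (i0 <= q.+1)%N = true by lia.
  lia.
case: (leqP i0 q) => H1.
  have -> : (i0 <= q.+1)%N = true by lia. lia.
have -> : (i0 <= q.+1)%N = false by lia. lia.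
Qed.

Definition U0 (r q : nat) : int := q%:Z - 1 - r%:Z.
Definition U1 (r i0 q : nat) : int := q%:Z - 1 - r%:Z - (if (i0 < q)%N then 1 else 0).

Lemma P_uzero n m : (0 < n)%N -> exists J : int, forall q, (1 <= q <= m.+1)%N ->
  P (u_zero n m) q = U0 ((m - n)./2) q + J * n%:Z.
Proof.
move=> Hn; set r := (m - n)./2.
exists (- ((- r%:Z) %/ n%:Z)%Z) => q Hq.
case: q Hq => [//|q] Hq.
rewrite /u_zero /complete P_cons P_cat ?size_nseq; last by lia.
rewrite P_nseq1; last by lia.
rewrite /u0_coord -/r /U0.
have := divz_eq (- r%:Z) n%:Z.
set a := ((- r%:Z) %/ n%:Z)%Z; set b := ((- r%:Z) %% n%:Z)%Z; lia.
Qed.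

Lemma P_uone n m : (0 < n)%N -> exists J : int, forall q, (1 <= q <= m.+1)%N ->
  P (u_one n m) q = U1 ((m - n)./2) ((m.+2)./2) q + J * n%:Z.
Proof.
move=> Hn; set r := (m - n)./2.
exists (- ((- r%:Z) %/ n%:Z)%Z) => q Hq.
case: q Hq => [//|q] Hq.
rewrite /u_one /complete P_cons P_cat ?size_mkseq; last by lia.
rewrite P_u1mid; try lia.
rewrite /u0_coord -/r /U1.
have -> : ((m.+2)./2 < q.+1)%N = ((m.+2)./2 <= q)%N by [].
have := divz_eq (- r%:Z) n%:Z.
set a := ((- r%:Z) %/ n%:Z)%Z; set b := ((- r%:Z) %% n%:Z)%Z.
case: ((m.+2)./2 <= q)%N; lia.
Qed.

Lemma sum_rev m (F : nat -> int) :
  \sum_(1 <= q < m.+2) F q = \sum_(1 <= q < m.+2) F (m.+2 - q)%N.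
Proof.
rewrite big_nat_rev; apply: eq_big_nat => q Hq; congr F; lia.
Qed.

Lemma pw0 n m r q t : (0 < n)%N -> m = (n + r.*2)%N -> h2nm n m = n ->
  (1 <= q <= m.+1)%N -> (n%:Z %| t)%Z ->
  W n m q <= `|U0 r q - t| + `|U0 r (m.+2 - q)%N - t|.
Proof.
move=> Hn Hm Hh Hq Ht.
have [H1 H2] := @pair_lb n (U0 r q) (U0 r (m.+2 - q)%N) t Hn Ht ltac:(rewrite /U0; lia).
move: H1 H2; rewrite /W Hh /U0.
set A := `|_ - t|; set B := `|_ - t|; lia.
Qed.

Lemma pw1 n m r q t : (0 < n)%N -> m = (n + r.*2).+1%N -> h2nm n m = n.+1 ->
  (1 <= q <= m.+1)%N -> (n%:Z %| t)%Z ->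
  W n m q <= `|U1 r ((m.+2)./2) q - t| + `|U1 r ((m.+2)./2) (m.+2 - q)%N - t|
             + (if q == (m.+2)./2 then 1 else 0).
Proof.
move=> Hn Hm Hh Hq Ht.
set i0 := (m.+2)./2.
have Hi0 : (i0.*2 = m.+2 \/ i0.*2 = m.+1)%N by rewrite /i0; lia.
rewrite /W Hh /U1.
case E1: (i0 < q)%N; case E2: (i0 < m.+2 - q)%N.
- lia.
- have [H1 H2] := @pair_lb n (q%:Z - 1 - r%:Z - 1) ((m.+2 - q)%N%:Z - 1 - r%:Z - 0) t Hn Ht
    ltac:(lia).
  move: H1 H2; set A := `|_ - t|; set B := `|_ - t|.
  case: (q =P i0) => [E|/eqP E]; lia.
- have [H1 H2] := @pair_lb n (q%:Z - 1 - r%:Z - 0) ((m.+2 - q)%N%:Z - 1 - r%:Z - 1) t Hn Ht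
    ltac:(lia).
  move: H1 H2; set A := `|_ - t|; set B := `|_ - t|.
  case: (q =P i0) => [E|/eqP E]; lia.
- have Eq : q = i0 by lia.
  have H1 := @self_lb n (q%:Z - 1 - r%:Z - 0) t Hn Ht ltac:(lia).
  have -> : ((m.+2 - q)%N%:Z - 1 - r%:Z - 0) = (q%:Z - 1 - r%:Z - 0) by lia.
  move: H1; set A := `|_ - t|; rewrite Eq eqxx; lia.
Qed.



Lemma Phi_U n m u t (U : nat -> int) J :
  (forall q, (1 <= q <= m.+1)%N -> P u q = U q + J * n%:Z) ->
  Phi m u t = \sum_(1 <= q < m.+2) `|U q - (t - J * n%:Z)|.
Proof.
move=> HJ; apply: eq_big_nat => q Hq; rewrite HJ; last by lia.
set x := U q; set y := J * n%:Z; congr (`| _ |); lia.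
Qed.

Lemma partD n m k : (1 < n)%N -> (n <= m)%N ->
  within n m k (u_zero n m) (zero_vertex m) ->
  (odd (m - n) -> within n m k (u_one n m) (zero_vertex m)) ->
  \sum_(1 <= q < m.+2) W n m q <= 2 * k%:Z + 1.
Proof.
move=> Hn Hnm Hu0 Hu1.
have Hn0 : (0 < n)%N by lia.
set r := (m - n)./2.
have Hod := odd_double_half (m - n).
case Ho: (odd (m - n)).
  have [t [Ht Hk]] := @within_Phi n m k (u_one n m) (Hu1 Ho).
  have [J HJ] := @P_uone n m Hn0.
  rewrite (@Phi_U n m _ t _ J HJ) in Hk.
  set t' := t - J * n%:Z in Hk.
  have Ht' : (n%:Z %| t')%Z by apply: rpredB => //; apply: dvdz_mull.
  have Hm : m = (n + r.*2).+1%N by move: Hod; rewrite Ho /r; lia.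
  have Hh : h2nm n m = n.+1 by rewrite /h2nm Ho.
  set i0 := (m.+2)./2.
  have Hi0 : i0 = i0.-1.+1 by rewrite /i0; lia.
  have Hi0m : (i0.-1 <= m)%N by rewrite /i0; lia.
  apply: (le_trans (@ler_sum_nat _ 1 m.+2 (W n m) (fun q => `|U1 r i0 q - t'| + `|U1 r i0 (m.+2 - q)%N - t'| + (if q == i0 then 1 else 0)) _)).
    by move=> q Hq; exact: (@pw1 n m r q t' Hn0 Hm Hh ltac:(lia) Ht').
  rewrite !big_split /= -(@sum_rev m (fun q => `|U1 r i0 q - t'|)).
  rewrite Hi0 (@sum_ind1 m i0.-1 Hi0m) -Hi0.
  move: Hk; set S := \sum_(1 <= q < m.+2) _; lia.
have [t [Ht Hk]] := @within_Phi n m k (u_zero n m) Hu0.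
have [J HJ] := @P_uzero n m Hn0.
rewrite (@Phi_U n m _ t _ J HJ) in Hk.
set t' := t - J * n%:Z in Hk.
have Ht' : (n%:Z %| t')%Z by apply: rpredB => //; apply: dvdz_mull.
have Hm : m = (n + r.*2)%N by move: Hod; rewrite Ho /r; lia.
have Hh : h2nm n m = n by rewrite /h2nm Ho.
apply: (le_trans (@ler_sum_nat _ 1 m.+2 (W n m) (fun q => `|U0 r q - t'| + `|U0 r (m.+2 - q)%N - t'|) _)).
  by move=> q Hq; exact: (@pw0 n m r q t' Hn0 Hm Hh ltac:(lia) Ht').
rewrite !big_split /= -(@sum_rev m (fun q => `|U0 r q - t'|)).
move: Hk; set S := \sum_(1 <= q < m.+2) _; lia.
Qed.

Theorem lemma5p30 (n m : nat) (v : seq int) :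
  (1 < n)%N -> (n <= m)%N ->
  is_vertex n m v ->
  (h2nm n m <= h2 n m v)%N ->
  sum_Ic n m v = 0 ->
  dist_le_D n m v.
Proof.
move=> Hn Hnm Hv Hh Hs k Hu0 Hu1.
have HD := @partD n m k Hn Hnm Hu0 Hu1.
have [K [K' [HK HK' Hpt]]] := @partC n m v Hn Hnm Hv Hh Hs.
have HS : Phi m v K + Phi m v K' <= \sum_(1 <= q < m.+2) W n m q.
  rewrite /Phi -big_split /=; apply: ler_sum_nat => q Hq; exact: Hpt.
case: (lerP (Phi m v K) k%:Z) => H.
  exact: (@Phi_within n m k v K Hn Hv HK H).
apply: (@Phi_within n m k v K' Hn Hv HK').
move: HS HD H; set a := Phi m v K; set b := Phi m v K'; set c := \sum_(1 <= q < m.+2) _; lia.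
Qed.
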